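(* Let $(A,B)$ be an $n\times n$ definite pencil and let $\epsilon>0$. If $A',B'\in\mathbb{C}^{n\times n}$ satisfy $\|A-A'\|_2,\|B-B'\|_2\le\eta<\frac{\epsilon}{\sqrt2}$ with $A-A'$ and $B-B'$ Hermitian, then $$\Lambda^{\mathrm{sym}}_{\epsilon-\sqrt2\eta}(A',B')\subseteq\Lambda^{\mathrm{sym}}_\epsilon(A,B).$$
   Context: A pencil $(A,B)$ of $n\times n$ complex matrices is definite if $A,B$ are Hermitian and $\gamma(A,B)=\min_{\|x\|_2=1}|x^H(A+iB)x|>0$. For a pencil $(A,B)$ with $A,B$ Hermitian and $\delta>0$, $\Lambda^{\mathrm{sym}}_\delta(A,B)=\{z\in\mathbb{C}:(A+E)u=z(B+F)u$ for some $u\ne0$ and Hermitian $E,F$ with $\sqrt{\|E\|_2^2+\|F\|_2^2}\le\delta\}$. *)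

(* Defs.v *)
From HB Require Import structures.
From mathcomp Require Import all_boot all_order all_algebra.
From mathcomp Require Import complex.
From mathcomp Require Import classical_sets reals.
Set Implicit Arguments. Unset Strict Implicit. Unset Printing Implicit Defensive.
Import Order.TTheory GRing.Theory Num.Theory.
Local Open Scope ring_scope.
Local Open Scope classical_set_scope.

Section Pencils.
Variable R : realType.
Local Notation C := R[i].

Definition ctrmx (m n : nat) (M : 'M[C]_(m, n)) : 'M[C]_(n, m) :=
  (map_mx (@conjc R) M)^T.

Definition herm_mx (n : nat) (M : 'M[C]_n) : Prop := ctrmx M = M.

Definition vnorm (n : nat) (x : 'cV[C]_n) : R :=
  Num.sqrt (\sum_(i < n) (ComplexField.Normc.normc (x i 0)) ^+ 2).

Definition norm2 (n : nat) (M : 'M[C]_n) : R :=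
  sup [set vnorm (M *m x) | x in [set x : 'cV[C]_n | vnorm x = 1]].

Definition crawford (n : nat) (A B : 'M[C]_n) : R :=
  inf [set ComplexField.Normc.normc ((ctrmx x *m (A + (Complex 0 1) *: B) *m x) 0 0)
      | x in [set x : 'cV[C]_n | vnorm x = 1]].

Definition definite_pencil (n : nat) (A B : 'M[C]_n) : Prop :=
  herm_mx A /\ herm_mx B /\ 0 < crawford A B.

Definition sym_pseudospec (n : nat) (delta : R) (A B : 'M[C]_n) : set C :=
  [set z | exists (u : 'cV[C]_n) (E F : 'M[C]_n),
      [/\ u != 0, herm_mx E, herm_mx F,
          Num.sqrt (norm2 E ^+ 2 + norm2 F ^+ 2) <= delta &
          (A + E) *m u = z *: ((B + F) *m u)]].

End Pencils.

(* Main.v *)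
Require Import Defs.
From HB Require Import structures.
From mathcomp Require Import all_boot all_order all_algebra.
From mathcomp Require Import complex.
From mathcomp Require Import classical_sets reals.
From mathcomp Require Import ring lra boolp.
Import Order.TTheory GRing.Theory Num.Theory.
Local Open Scope ring_scope.
Local Open Scope classical_set_scope.
Set Implicit Arguments. Unset Strict Implicit.

Section Aux.
Variable R : realType.
Local Notation C := R[i].
Local Notation nc := (@ComplexField.Normc.normc R).

Lemma nc_ge0 (z : C) : 0 <= nc z.
Proof. by case: z => a b; rewrite /= sqrtr_ge0. Qed.

Lemma nc_sub (u v : C) : nc (u - v) <= nc u + nc v.
Proof. by rewrite -(normcN v); apply: le_normcD. Qed.

Lemma cs_sq n (a b : 'I_n -> R) :
  (\sum_i a i * b i) ^+ 2 <= (\sum_i a i ^+ 2) * (\sum_i b i ^+ 2).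
Proof.
have e1 : (\sum_i a i ^+ 2) * (\sum_i b i ^+ 2) = \sum_i \sum_j (a i ^+ 2 * b j ^+ 2).
  by rewrite big_distrlr.
have e2 : (\sum_i a i ^+ 2) * (\sum_i b i ^+ 2) = \sum_i \sum_j (a j ^+ 2 * b i ^+ 2).
  rewrite mulrC big_distrlr; apply: eq_bigr => i _; apply: eq_bigr => j _.
  by rewrite mulrC.
have e3 : (\sum_i a i * b i) ^+ 2 = \sum_i \sum_j ((a i * b i) * (a j * b j)).
  by rewrite expr2 big_distrlr.
have h : 0 <= \sum_i \sum_j (a i * b j - a j * b i) ^+ 2.
  by apply: sumr_ge0 => i _; apply: sumr_ge0 => j _; apply: sqr_ge0.
have e4 : \sum_i \sum_j (a i * b j - a j * b i) ^+ 2 =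
  \sum_i \sum_j (a i ^+ 2 * b j ^+ 2) + \sum_i \sum_j (a j ^+ 2 * b i ^+ 2)
  - (\sum_i \sum_j ((a i * b i) * (a j * b j))) * 2.
  rewrite big_distrl -big_split -sumrB /=; apply: eq_bigr => i _.
  rewrite big_distrl -big_split -sumrB /=; apply: eq_bigr => j _.
  ring.
rewrite e4 -e1 -e2 in h; move: h; rewrite -e3 => h.
lra.
Qed.

Lemma cs n (a b : 'I_n -> R) :
  \sum_i a i * b i <= Num.sqrt (\sum_i a i ^+ 2) * Num.sqrt (\sum_i b i ^+ 2).
Proof.
have P0 : 0 <= \sum_i a i ^+ 2 by apply: sumr_ge0 => i _; apply: sqr_ge0.
rewrite -sqrtrM //; apply: le_trans (ler_norm _) _.
by rewrite -sqrtr_sqr; apply: ler_wsqrtr; apply: cs_sq.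
Qed.

Lemma mink n (a b c : 'I_n -> R) :
  (forall i, 0 <= a i) -> (forall i, 0 <= b i) -> (forall i, 0 <= c i) ->
  (forall i, c i <= a i + b i) ->
  Num.sqrt (\sum_i c i ^+ 2) <= Num.sqrt (\sum_i a i ^+ 2) + Num.sqrt (\sum_i b i ^+ 2).
Proof.
move=> a0 b0 c0 cab.
set P := \sum_i a i ^+ 2; set Q := \sum_i b i ^+ 2.
have P0 : 0 <= P by apply: sumr_ge0 => i _; apply: sqr_ge0.
have Q0 : 0 <= Q by apply: sumr_ge0 => i _; apply: sqr_ge0.
have p0 := sqrtr_ge0 P; have q0 := sqrtr_ge0 Q.
have hp := sqr_sqrtr P0; have hq := sqr_sqrtr Q0.
have h1 : \sum_i c i ^+ 2 <= \sum_i (a i + b i) ^+ 2.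
  apply: ler_sum => i _; have := a0 i; have := b0 i; have := c0 i; have := cab i.
  move=> *; nra.
have h2 : \sum_i (a i + b i) ^+ 2 = P + Q + (\sum_i a i * b i) * 2.
  rewrite /P /Q big_distrl -!big_split /=; apply: eq_bigr => i _; ring.
have h3 := cs a b.
have h4 : \sum_i c i ^+ 2 <= (Num.sqrt P + Num.sqrt Q) ^+ 2.
  rewrite h2 in h1; rewrite -/P -/Q in h3. nra.
apply: le_trans (ler_wsqrtr h4) _.
by rewrite sqrtr_sqr ger0_norm ?addr_ge0.
Qed.


Lemma vnormB n (u v : 'cV[C]_n) : vnorm (u - v) <= vnorm u + vnorm v.
Proof.
rewrite /vnorm; under eq_bigr do rewrite !mxE.
by apply: mink => i; rewrite ?nc_ge0 ?nc_sub.
Qed.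

Lemma entry_le1 n (x : 'cV[C]_n) j : vnorm x = 1 -> nc (x j 0) <= 1.
Proof.
move=> h.
have S0 : 0 <= \sum_i nc (x i 0) ^+ 2 by apply: sumr_ge0 => i _; apply: sqr_ge0.
have S1 : \sum_i nc (x i 0) ^+ 2 = 1.
  by rewrite -(sqr_sqrtr S0); move: h; rewrite /vnorm => ->; rewrite expr1n.
have : nc (x j 0) ^+ 2 <= 1.
  rewrite -S1 (bigD1 j) //= lerDl; apply: sumr_ge0 => i _; apply: sqr_ge0.
have := nc_ge0 (x j 0). nra.
Qed.

Lemma vnorm_bnd n (M : 'M[C]_n) (x : 'cV[C]_n) : vnorm x = 1 ->
  vnorm (M *m x) <= Num.sqrt (\sum_i (\sum_j nc (M i j)) ^+ 2).
Proof.
move=> hx; rewrite /vnorm; apply: ler_wsqrtr; apply: ler_sum => i _.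
rewrite mxE.
have h : nc (\sum_j M i j * x j 0) <= \sum_j nc (M i j).
  apply: le_trans (_ : _ <= \sum_j nc (M i j) * nc (x j 0)) _.
    apply: (big_ind2 (fun u r => nc u <= r)).
    - by rewrite ComplexField.Normc.normc0.
    - move=> u1 r1 u2 r2 h1 h2; exact: le_trans (le_normcD _ _) (lerD h1 h2).
    - by move=> j _; rewrite ComplexField.Normc.normcM.
  apply: ler_sum => j _; apply: ler_piMr; [exact: nc_ge0 | exact: entry_le1].
by rewrite !expr2; apply: ler_pM => //; exact: nc_ge0.
Qed.

Definition nset n (M : 'M[C]_n) :=
  [set vnorm (M *m x) | x in [set x : 'cV[C]_n | vnorm x = 1]].

Lemma nset_bnd n (M : 'M[C]_n) : has_ubound (nset M).
Proof. by exists (Num.sqrt (\sum_i (\sum_j nc (M i j)) ^+ 2)) => r [x hx <-]; apply: vnorm_bnd. Qed.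

Lemma norm2_ge0 n (M : 'M[C]_n) : 0 <= norm2 M.
Proof.
have [[r hr]|e] := pselect (nset M !=set0).
  apply: le_trans (ub_le_sup (nset_bnd M) hr).
  by case: hr => x _ <-; apply: sqrtr_ge0.
rewrite /norm2 (_ : [set _ | _ in _] = set0) ?sup0 //.
by apply/seteqP; split=> y // Sy; exfalso; apply: e; exists y.
Qed.

Lemma norm2B n (X Y : 'M[C]_n) : norm2 (X - Y) <= norm2 X + norm2 Y.
Proof.
have [ne|e] := pselect (nset (X - Y) !=set0).
  apply: (@ge_sup _ (nset (X - Y))) ne _ => r [x hx <-]; rewrite mulmxBl.
  apply: le_trans (vnormB _ _) _; apply: lerD; apply: (ub_le_sup (nset_bnd _)); by exists x.
rewrite [norm2 (X - Y)]/norm2 (_ : [set _ | _ in _] = set0) ?sup0 ?addr_ge0 ?norm2_ge0 //.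
by apply/seteqP; split=> y // Sy; exfalso; apply: e; exists y.
Qed.

Lemma hermB n (X Y : 'M[C]_n) : herm_mx X -> herm_mx Y -> herm_mx (X - Y).
Proof.
rewrite /herm_mx /ctrmx => /matrixP hX /matrixP hY; apply/matrixP => i j.
have := hX i j; have := hY i j; rewrite !mxE => <- <-.
by rewrite raddfB.
Qed.


Lemma real_fin (e f a b eta eps r : R) :
  0 <= e -> 0 <= f -> 0 <= a -> 0 <= b -> 0 <= eta -> r ^+ 2 = 2 -> 0 <= r ->
  e <= a + eta -> f <= b + eta ->
  Num.sqrt (a ^+ 2 + b ^+ 2) <= eps - r * eta ->
  Num.sqrt (e ^+ 2 + f ^+ 2) <= eps.
Proof.
move=> e0 f0 a0 b0 eta0 hr r0 he hf hn.
set s := Num.sqrt (a ^+ 2 + b ^+ 2) in hn.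
have s0 : 0 <= s := sqrtr_ge0 _.
have hs : s ^+ 2 = a ^+ 2 + b ^+ 2 by rewrite sqr_sqrtr // addr_ge0 // sqr_ge0.
have he2 : e ^+ 2 <= (a + eta) ^+ 2 by rewrite !expr2; apply: ler_pM.
have hf2 : f ^+ 2 <= (b + eta) ^+ 2 by rewrite !expr2; apply: ler_pM.
have hsq : (a + b) ^+ 2 <= (r * s) ^+ 2.
  rewrite exprMn hr hs -subr_ge0.
  have -> : 2 * (a ^+ 2 + b ^+ 2) - (a + b) ^+ 2 = (a - b) ^+ 2 by ring.
  exact: sqr_ge0.
have hab : a + b <= r * s.
  rewrite -(ger0_norm (addr_ge0 a0 b0)) -(ger0_norm (mulr_ge0 r0 s0)) -!sqrtr_sqr.
  exact: ler_wsqrtr hsq.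
have hm : eta * (a + b) <= eta * (r * s) := ler_wpM2l eta0 hab.
have hle : e ^+ 2 + f ^+ 2 <= (s + r * eta) ^+ 2.
  apply: le_trans (lerD he2 hf2) _.
  have -> : (a + eta) ^+ 2 + (b + eta) ^+ 2 =
    a ^+ 2 + b ^+ 2 + (eta * (a + b)) *+ 2 + eta ^+ 2 *+ 2 by ring.
  have -> : (s + r * eta) ^+ 2 = s ^+ 2 + (eta * (r * s)) *+ 2 + r ^+ 2 * eta ^+ 2 by ring.
  rewrite hr hs; lra.
apply: le_trans (ler_wsqrtr hle) _.
rewrite sqrtr_sqr ger0_norm; first lra.
by rewrite addr_ge0 // mulr_ge0.
Qed.

End Aux.

Theorem lemma3p10 (R : realType) (n : nat) (A B A' B' : 'M[R[i]]_n)
    (eps eta : R) :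
  definite_pencil A B -> 0 < eps ->
  herm_mx (A - A') -> herm_mx (B - B') ->
  norm2 (A - A') <= eta -> norm2 (B - B') <= eta ->
  eta < eps / Num.sqrt 2 ->
  sym_pseudospec (eps - Num.sqrt 2 * eta) A' B' `<=` sym_pseudospec eps A B.
Proof.
move=> _ eps0 hA hB nA nB _ z [u [E' [F' [u0 hE hF hn heq]]]].
exists u, (E' - (A - A')), (F' - (B - B')); split => //.
- exact: hermB.
- exact: hermB.
- apply: (real_fin (norm2_ge0 _) (norm2_ge0 _) (norm2_ge0 E') (norm2_ge0 F')
     (le_trans (norm2_ge0 _) nA) _ (sqrtr_ge0 _) _ _ hn).
  + by rewrite sqr_sqrtr.
  + exact: le_trans (norm2B E' (A - A')) (lerD (lexx _) nA).
  + exact: le_trans (norm2B F' (B - B')) (lerD (lexx _) nB).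
- have -> : A + (E' - (A - A')) = A' + E'.
    by rewrite opprB addrCA [X in _ + X]addrC subrK addrC.
  have -> : B + (F' - (B - B')) = B' + F'.
    by rewrite opprB addrCA [X in _ + X]addrC subrK addrC.
  exact: heq.
Qed.
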